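(* The ordinary generating function $A(x,y;p,1)=\sum_{n\ge1}a_n(y;p,1)x^n$ is given by $$A(x,y;p,1)=xyp+\frac{x^2yp(1-p)}{1-yp}\left(\sum_{j\ge0}\frac{(-1)^jx^jp^{j+\binom{j+2}{2}}}{\prod_{i=0}^{j}(1-p-xp^{i+1})}-y^2p^2\sum_{j\ge0}\frac{(-1)^jx^jy^jp^{2j+\binom{j+2}{2}}}{\prod_{i=0}^{j}(1-p-xyp^{i+2})}\right).$$
   Context: An inversion sequence of length $n$ is a sequence $\rho=\rho_1\cdots\rho_n$ of integers with $1\le \rho_i\le i$ for all $i$; $I_{n,i}$ is the set of those of length $n$ with last letter $i$. Let $\mathrm{area}(\rho)=\rho_1+\cdots+\rho_n$ and $\mathrm{sper}(\rho)=n+\rho_1+\sum_{i=1}^{n-1}\max(\rho_{i+1}-\rho_i,0)$ (area and semi-perimeter of the associated bargraph). Define $a_n(y;p,q)=\sum_{i=1}^n y^i\sum_{\rho\in I_{n,i}}p^{\mathrm{area}(\rho)}q^{\mathrm{sper}(\rho)}$. The identity is one of power series in $x$ (with coefficients rational functions of $p,y$; e.g. valid for $|x|,|p|<1$ small enough). *)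

(* Defs.v *)
From HB Require Import structures.
From mathcomp Require Import all_boot all_order all_algebra.
From mathcomp Require Import all_classical all_reals all_analysis.
Set Implicit Arguments. Unset Strict Implicit. Unset Printing Implicit Defensive.
Import Order.TTheory GRing.Theory Num.Theory.
Import numFieldNormedType.Exports.
Local Open Scope ring_scope.

(* A candidate word of length n: position i (0-based) holds a value in 0..n.
   rho_{i+1} (1-based in the paper) is  val (f i). *)
Definition word n := {ffun 'I_n -> 'I_n.+1}.

(* inversion sequence: 1 <= rho_i <= i (1-based), i.e. 1 <= f i <= i+1 (0-based) *)
Definition is_invseq n (f : word n) : bool :=
  [forall i : 'I_n, (0 < f i)%N && (f i <= i.+1)%N].

Definition letters n (f : word n) : seq nat := [seq val (f i) | i <- enum 'I_n].

Definition last_letter n (f : word n) : nat := last 0%N (letters f).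

Definition area n (f : word n) : nat := (\sum_(i < n) val (f i))%N.

(* sper = n + rho_1 + sum_{i=1}^{n-1} max(rho_{i+1} - rho_i, 0);
   truncated nat subtraction implements max(. , 0). *)
Definition sper n (f : word n) : nat :=
  (n + head 0 (letters f)
     + \sum_(i < n.-1) (nth 0 (letters f) i.+1 - nth 0 (letters f) i))%N.

Definition a_coef (R : numDomainType) (n : nat) (y p q : R) : R :=
  \sum_(1 <= i < n.+1) y ^+ i *
    \sum_(f : word n | is_invseq f && (last_letter f == i)) p ^+ area f * q ^+ sper f.

Definition rhs_term1 (R : fieldType) (x p : R) (j : nat) : R :=
  (-1) ^+ j * x ^+ j * p ^+ (j + 'C(j.+2, 2)) /
    \prod_(i < j.+1) (1 - p - x * p ^+ i.+1).

Definition rhs_term2 (R : fieldType) (x y p : R) (j : nat) : R :=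
  (-1) ^+ j * x ^+ j * y ^+ j * p ^+ (2 * j + 'C(j.+2, 2)) /
    \prod_(i < j.+1) (1 - p - x * y * p ^+ i.+2).

(* Main.v *)
Require Import Defs.
From HB Require Import structures.
From mathcomp Require Import all_boot all_order all_algebra.
From mathcomp Require Import all_classical all_reals all_analysis.
From mathcomp Require Import ring lra.
Import Order.TTheory GRing.Theory Num.Theory.
Import numFieldNormedType.Exports.
Local Open Scope ring_scope.
Local Open Scope classical_set_scope.
Section S.
Variable R : realType.
Implicit Types (w p v z : R).

Definition Pq p m : R := \prod_(i < m) (1 - p ^+ i.+1).
Definition Qw w p k : R := \prod_(i < k) (1 - w * p ^+ i).
Definition gk w p k : R := (-1) ^+ k * w ^+ k * p ^+ 'C(k.+1, 2).
Definition Ek w p j : R := (-1) ^+ j.+1 * w ^+ j.+1 * p ^+ (j + 'C(j.+1, 2)) / Qw w p j.+1.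
Definition hN v p N : R := \sum_(m < N) v ^+ m * Pq p m.

Lemma func_eq v p N : (1 - v) * hN v p N + v * p * hN (v * p) p N = 1 - v ^+ N * Pq p N.
Proof.
elim: N => [|N IH]; first by rewrite /hN !big_ord0 /Pq big_ord0; ring.
have E1 : hN v p N.+1 = hN v p N + v ^+ N * Pq p N by rewrite /hN big_ord_recr.
have E2 : hN (v * p) p N.+1 = hN (v * p) p N + (v * p) ^+ N * Pq p N by rewrite /hN big_ord_recr.
have E3 : Pq p N.+1 = Pq p N * (1 - p ^+ N.+1) by rewrite /Pq big_ord_recr.
rewrite E1 E2 E3 !exprS exprMn.
transitivity (((1 - v) * hN v p N + v * p * hN (v * p) p N) + 
   ((1 - v) * v ^+ N * Pq p N + v * p * (v ^+ N * p ^+ N * Pq p N))); first by ring.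
rewrite IH; ring.
Qed.

Lemma gkS w p K : gk w p K.+1 = - (gk w p K * w * p ^+ K.+1).
Proof. rewrite /gk binS bin1 exprD !exprS. ring. Qed.

Lemma QwS w p K : Qw w p K.+1 = Qw w p K * (1 - w * p ^+ K).
Proof. by rewrite /Qw big_ord_recr. Qed.

Lemma Qw_neq0 w p K : (forall i, 1 - w * p ^+ i != 0) -> Qw w p K != 0.
Proof. by move=> H; rewrite /Qw; apply/prodf_neq0 => i _. Qed.

Lemma iter_eq w p N K : (forall i, 1 - w * p ^+ i != 0) ->
  hN w p N = \sum_(k < K) gk w p k / Qw w p k.+1 + gk w p K * hN (w * p ^+ K) p N / Qw w p K
   - (\sum_(k < K) gk w p k / Qw w p k.+1 * (w * p ^+ k) ^+ N) * Pq p N.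
Proof.
move=> Hnz; elim: K => [|K IH].
  by rewrite !big_ord0 /gk /Qw big_ord0 expr0 bin_small // !expr0 !mulr1 divr1 mul0r subr0 add0r mul1r.
rewrite IH !big_ord_recr /= gkS QwS.
have H := func_eq (w * p ^+ K) p N.
have E : w * p ^+ K * p = w * p ^+ K.+1 by rewrite exprSr mulrA.
rewrite E in H.
set A := hN (w * p ^+ K) p N in H *.
set B := hN (w * p ^+ K.+1) p N in H *.
have HQ := @Qw_neq0 w p K Hnz.
have HK := Hnz K.
have -> : A = (1 - (w * p ^+ K) ^+ N * Pq p N - w * p ^+ K.+1 * B) / (1 - w * p ^+ K).
  apply: (@mulfI _ (1 - w * p ^+ K)) => //.
  rewrite [RHS]mulrC divfK // -H; ring.
field.
by rewrite HK HQ.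
Qed.
Lemma C_eq w p K : (forall i, 1 - w * p ^+ i != 0) ->
  \sum_(k < K.+1) gk w p k / Qw w p k.+1 = 1 - (1 - p) * \sum_(j < K) Ek w p j - Ek w p K.
Proof.
move=> Hnz; elim: K => [|K IH].
  rewrite big_ord_recr !big_ord0 /gk /Ek /Qw big_ord_recr big_ord0 /= .
  have Hw := Hnz 0%N; rewrite expr0 mulr1 in Hw.
  rewrite !expr0 !expr1 !mulr1 mul1r; field; by rewrite Hw.
rewrite big_ord_recr IH big_ord_recr /=.
have H1 := @Qw_neq0 w p K.+1 Hnz.
have H2 := Hnz K.+1.
rewrite /Ek /gk (QwS w p K.+1).
rewrite !binS !bin1 bin0 !exprD !exprS.
move: (\sum_(j < K) _) => S.
move: (Qw w p K.+1) H1 => Q H1.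
field.
by rewrite -exprS H1 H2.
Qed.
Lemma prod_fact z p n : 1 - p != 0 ->
  \prod_(i < n) (1 - p - z * p ^+ i.+1) = (1 - p) ^+ n * Qw (z * p / (1 - p)) p n.
Proof.
move=> Hp; elim: n => [|n IH]; first by rewrite /Qw !big_ord0 expr0 mulr1.
rewrite big_ord_recr IH QwS !exprS /=.
field. exact: Hp.
Qed.

Lemma term1_E z p j : 1 - p != 0 -> (forall i, 1 - z * p / (1 - p) * p ^+ i != 0) ->
  z * rhs_term1 z p j = - Ek (z * p / (1 - p)) p j.
Proof.
move=> Hp Hnz; rewrite /rhs_term1 /Ek prod_fact //.
have HQ := @Qw_neq0 _ _ j.+1 Hnz.
move: (Qw _ p j.+1) HQ => Q HQ.
rewrite binS bin1 !exprD !exprS !exprMn !exprVn.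
field. by rewrite HQ expf_neq0 // Hp.
Qed.
Lemma normPq p m : `|p| <= 1 -> `|Pq p m| <= 2 ^+ m.
Proof.
move=> Hp; elim: m => [|m IH]; first by rewrite /Pq big_ord0 normr1 expr0.
rewrite /Pq big_ord_recr /= -/(Pq p m) normrM (exprSr (2:R) m).

apply: ler_pM => //.
apply: (le_trans (ler_normB _ _)).
rewrite normr1 normrX.
have : `|p| ^+ m.+1 <= 1 by apply: exprn_ile1.
lra.
Qed.

Lemma inv_le2 (a : R) : 1 / 2 <= a -> a^-1 <= 2.
Proof.
move=> Ha; have Ha0 : 0 < a by lra.
rewrite -[a^-1]mul1r ler_pdivrMr //; lra.
Qed.

Lemma normQw w p k : `|w| <= 1 / 2 -> `|p| <= 1 ->
  (forall i, 1 - w * p ^+ i != 0) /\ `|Qw w p k|^-1 <= 2 ^+ k.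
Proof.
move=> Hw Hp.
have Hf : forall i, 1 / 2 <= `|1 - w * p ^+ i|.
  move=> i; have := lerB_dist 1 (w * p ^+ i).
  rewrite normr1 normrM normrX.
  have H1 : `|p| ^+ i <= 1 by apply: exprn_ile1.
  have H2 : `|w| * `|p| ^+ i <= `|w| by rewrite ler_piMr.
  lra.
have Hnz : forall i, 1 - w * p ^+ i != 0.
  move=> i; rewrite -normr_gt0; have := Hf i; lra.
split => //.
elim: k => [|k IH]; first by rewrite /Qw big_ord0 normr1 invr1 expr0.
rewrite QwS normrM invfM (exprSr (2:R) k).
apply: ler_pM => //.
exact: inv_le2.
Qed.

Lemma geo_le2 (r : R) N : 0 <= r <= 1 / 2 -> \sum_(k < N) r ^+ k <= 2.
Proof.
move=> /andP[H0 H1].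
have : \sum_(k < N) r ^+ k <= 2 - 2 * r ^+ N.
  elim: N => [|N IH]; first by rewrite big_ord0 expr0; lra.
  rewrite big_ord_recr /= exprS.
  have : 0 <= r ^+ N by rewrite exprn_ge0.
  nra.
have : 0 <= r ^+ N by rewrite exprn_ge0.
lra.
Qed.

Lemma normhN v p N : `|v| <= 1 / 4 -> `|p| <= 1 -> `|hN v p N| <= 2.
Proof.
move=> Hv Hp; have Hv0 := normr_ge0 v.
apply: (le_trans (ler_norm_sum _ _ _)).
apply: (le_trans _ (geo_le2 (2 * `|v|) N _)); last by apply/andP; split; lra.
apply: ler_sum => i _.
rewrite normrM normrX exprMn mulrC.
apply: ler_pM => //.
exact: normPq.
Qed.
Lemma pow_le (a b : R) n : 0 <= a -> a <= b -> a ^+ n <= b ^+ n.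
Proof.
move=> Ha Hab; apply: lerXn2r => //; rewrite nnegrE //; lra.
Qed.

Lemma normgk w p k : `|p| <= 1 -> `|gk w p k| <= `|w| ^+ k.
Proof.
move=> Hp; rewrite /gk !normrM !normrX normrN normr1 expr1n mul1r.
rewrite -[X in _ <= X]mulr1; apply: ler_wpM2l; first by rewrite exprn_ge0.
exact: exprn_ile1.
Qed.

Lemma diff_bound w p K : `|w| <= 1 / 8 -> `|p| <= 1 ->
  `|hN w p K - \sum_(k < K) gk w p k / Qw w p k.+1| <= 6 * (1 / 4) ^+ K.
Proof.
move=> Hw Hp.
have Hw0 := normr_ge0 w.
have [Hnz _] := @normQw w p 0 ltac:(lra) Hp.
have HQ : forall k, `|Qw w p k|^-1 <= 2 ^+ k.
  by move=> k; case: (@normQw w p k ltac:(lra) Hp).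
rewrite (@iter_eq w p K K Hnz).
set S := \sum_(k < K) _.
set T1 := gk w p K * _ / _.
set T2 := (\sum_(k < K) _) * _.
have -> : S + T1 - T2 - S = T1 - T2 by ring.
have H2w : 0 <= 2 * `|w| <= 1 / 4 by apply/andP; split; lra.
have Hq : (2 * `|w|) ^+ K <= (1 / 4) ^+ K by apply: pow_le; lra.
have Hq0 : 0 <= (2 * `|w|) ^+ K by rewrite exprn_ge0 //; lra.
have B1 : `|T1| <= 2 * (2 * `|w|) ^+ K.
  rewrite /T1 normrM (normrM (gk w p K)) normfV exprMn.
  have Hv : `|w * p ^+ K| <= 1 / 4.
    rewrite normrM normrX.
    have : `|p| ^+ K <= 1 by apply: exprn_ile1.
    have : 0 <= `|p| ^+ K by rewrite exprn_ge0.
    nra.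
  have := @normhN _ p K Hv Hp.
  have := @normgk w p K Hp.
  have := HQ K.
  have : 0 <= `|gk w p K| by [].
  have : 0 <= `|hN (w * p ^+ K) p K| by [].
  have : 0 <= `|Qw w p K|^-1 by rewrite invr_ge0.
  have : 0 <= `|w| ^+ K by rewrite exprn_ge0.
  have : 0 <= 2 ^+ K :> R by rewrite exprn_ge0.
  move: (`|gk w p K|) (`|hN (w * p ^+ K) p K|) (`|Qw w p K|^-1) (`|w| ^+ K) (2 ^+ K : R).
  move=> a b c d e ? ? ? ? ? ? ? ?.
  have Hab : a * b <= d * 2 by apply: ler_pM.
  have : a * b * c <= d * 2 * e by apply: ler_pM => //; apply: mulr_ge0.
  nra.
have B2 : `|T2| <= 4 * (2 * `|w|) ^+ K.
  rewrite /T2 normrM exprMn.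
  have HP := @normPq p K Hp.
  have Hs : `|\sum_(k < K) gk w p k / Qw w p k.+1 * (w * p ^+ k) ^+ K| <= 4 * `|w| ^+ K.
    apply: (le_trans (ler_norm_sum _ _ _)).
    apply: (@le_trans _ _ (\sum_(k < K) 2 * `|w| ^+ K * (2 * `|w|) ^+ k)).
      apply: ler_sum => k _.
      rewrite normrM (normrM (gk w p k)) normfV normrX (normrM w) normrX.
      have h1 := @normgk w p k Hp.
      have h2 := HQ k.+1.
      have h3 : `|p| ^+ k <= 1 by apply: exprn_ile1.
      rewrite exprS in h2; rewrite [(2 * `|w|) ^+ k]exprMn [(`|w| * _) ^+ K]exprMn.
      have h4 : `|w| ^+ K * `|p| ^+ k ^+ K <= `|w| ^+ K.
        rewrite -[X in _ <= X]mulr1; apply: ler_wpM2l; first by rewrite exprn_ge0.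
        by apply: exprn_ile1; rewrite ?exprn_ge0.
      have : 0 <= `|Qw w p k.+1|^-1 by rewrite invr_ge0.
      have : 0 <= `|w| ^+ K * `|p| ^+ k ^+ K by rewrite mulr_ge0 // exprn_ge0 // exprn_ge0.
      have : 0 <= `|w| ^+ K by rewrite exprn_ge0.
      have : 0 <= `|w| ^+ k by rewrite exprn_ge0.
      have : 0 <= 2 ^+ k :> R by rewrite exprn_ge0.
      have : 0 <= `|gk w p k| by [].
      move: (`|gk w p k|) (`|Qw w p k.+1|^-1) (`|w| ^+ K * `|p| ^+ k ^+ K) (`|w| ^+ K) (`|w| ^+ k) (2 ^+ k : R) h1 h2 h4.
      move=> a b c d e f h1 h2 h4 ha hf he hd hc hb.
      have Hab : a * b <= e * (2 * f) by apply: ler_pM.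
      have : a * b * (d * `|p| ^+ k ^+ K) <= e * (2 * f) * d.
        apply: ler_pM => //. exact: mulr_ge0 ha hb.
      nra.
    rewrite -mulr_sumr.
    have := geo_le2 (2 * `|w|) K ltac:(apply/andP; split; lra).
    have : 0 <= 2 * `|w| ^+ K by rewrite mulr_ge0 // exprn_ge0.
    nra.
  have : 0 <= `|Pq p K| by [].
  have : 0 <= `|w| ^+ K by rewrite exprn_ge0.
  have : 0 <= `|\sum_(k < K) gk w p k / Qw w p k.+1 * (w * p ^+ k) ^+ K| by [].
  move: Hs HP; move: (`|\sum_(k < K) _|) (`|Pq p K|) (`|w| ^+ K) (2 ^+ K : R).
  move=> a b c d Hs HP ? ? ?.
  have : a * b <= (4 * c) * d by apply: ler_pM.
  nra.
apply: (le_trans (ler_normB _ _)).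
nra.
Qed.
Lemma prod_inv_bound (F : nat -> R) k : (forall i, 1 / 2 <= `|F i|) ->
  `|\prod_(i < k) F i|^-1 <= 2 ^+ k.
Proof.
move=> Hf; elim: k => [|k IH]; first by rewrite big_ord0 normr1 invr1 expr0.
rewrite big_ord_recr /= normrM invfM (exprSr (2:R) k).
apply: ler_pM => //.
exact: inv_le2.
Qed.

Lemma normEk w p K : `|w| <= 1 / 8 -> `|p| <= 1 -> `|Ek w p K| <= (1 / 4) ^+ K.
Proof.
move=> Hw Hp.
have Hw0 := normr_ge0 w.
have HQ : `|Qw w p K.+1|^-1 <= 2 ^+ K.+1 by case: (@normQw w p K.+1 ltac:(lra) Hp).
rewrite /Ek normrM normfV !normrM !normrX normrN normr1 expr1n.
have h1 : `|p| ^+ (K + 'C(K.+1, 2)) <= 1 by apply: exprn_ile1.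
have h0 : 0 <= `|p| ^+ (K + 'C(K.+1, 2)) by rewrite exprn_ge0.
have hq0 : 0 <= `|Qw w p K.+1|^-1 by rewrite invr_ge0.
have hw0 : 0 <= `|w| ^+ K.+1 by rewrite exprn_ge0.
have A : `|w| ^+ K.+1 * `|p| ^+ (K + 'C(K.+1, 2)) <= `|w| ^+ K.+1.
  by rewrite -[X in _ <= X]mulr1 ler_wpM2l.
have B : 1 * `|w| ^+ K.+1 * `|p| ^+ (K + 'C(K.+1, 2)) / `|Qw w p K.+1| <= `|w| ^+ K.+1 * 2 ^+ K.+1.
  rewrite mul1r; apply: ler_pM => //; by rewrite mulr_ge0.
apply: (le_trans B); rewrite -exprMn exprS.
have : (`|w| * 2) ^+ K <= (1 / 4) ^+ K by apply: pow_le; rewrite ?mulr_ge0 //; lra.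
have : 0 <= (`|w| * 2) ^+ K by rewrite exprn_ge0 // mulr_ge0.
nra.
Qed.

Lemma geo_to0 (u : R ^nat) C r : 0 <= r < 1 -> (forall n, `|u n| <= C * r ^+ n) ->
  u @ \oo --> 0.
Proof.
move=> /andP[Hr0 Hr1] Hu; apply/norm_cvg0P.
apply: (@squeeze_cvgr _ _ _ _ (cst 0) (geometric C r)).
- by apply: nearW => n; rewrite normr_ge0 /=; exact: Hu.
- exact: cvg_cst.
- by apply: cvg_geometric; rewrite ger0_norm.
Qed.

Lemma geo_cvg (u : R ^nat) C r : 0 <= r < 1 -> (forall n, `|u n| <= C * r ^+ n) ->
  cvgn (series u).
Proof.
move=> /andP[Hr0 Hr1] Hu; apply: normed_cvg.
apply: (@series_le_cvg _ _ (geometric C r)).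
- by move=> n /=.
- move=> n /=; apply: (le_trans _ (Hu n)); exact: normr_ge0.
- exact: Hu.
- by apply: is_cvg_geometric_series; rewrite ger0_norm.
Qed.
Lemma core z p : `|z| <= 1 / 8 -> `|p| <= 1 / 8 ->
  exists S1, series (rhs_term1 z p) @ \oo --> S1 /\
    (fun N => hN (z * p / (1 - p)) p N) @ \oo --> 1 + (1 - p) * (z * S1).
Proof.
move=> Hz Hp.
have Hz0 := normr_ge0 z; have Hp0 := normr_ge0 p.
have Hpl : p <= `|p| := ler_norm p.
have Hp1 : 0 < 1 - p by lra.
have Hp1' : 1 - p != 0 by rewrite gt_eqF.
set w := z * p / (1 - p).
have Hw : `|w| <= 1 / 8.
  rewrite /w normrM normfV normrM (ger0_norm (ltW Hp1)) ler_pdivrMr //.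
  have : `|z| * `|p| <= 1 / 8 * (1 / 8) by apply: ler_pM.
  lra.
have Hw0 := normr_ge0 w.
have Hp1b : `|p| <= 1 by lra.
have [Hnz _] := @normQw w p 0 ltac:(lra) Hp1b.
have Hb : forall j, `|rhs_term1 z p j| <= 2 * (1 / 4) ^+ j.
  move=> j; rewrite /rhs_term1 normrM normfV !normrM !normrX normrN normr1 expr1n.
  have HF : forall i, 1 / 2 <= `|1 - p - z * p ^+ i.+1|.
    move=> i; have := lerB_dist 1 (p + z * p ^+ i.+1).
    rewrite normr1 opprD addrA.
    have := ler_normD p (z * p ^+ i.+1).
    rewrite normrM normrX.
    have : `|p| ^+ i.+1 <= 1 by apply: exprn_ile1.
    have : 0 <= `|p| ^+ i.+1 by rewrite exprn_ge0.
    nra.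
  have HI := @prod_inv_bound _ j.+1 HF.
  have h1 : `|p| ^+ (j + 'C(j.+2, 2)) <= 1 by apply: exprn_ile1.
  have h0 : 0 <= `|p| ^+ (j + 'C(j.+2, 2)) by rewrite exprn_ge0.
  have hz : `|z| ^+ j * `|p| ^+ (j + 'C(j.+2, 2)) <= `|z| ^+ j.
    by rewrite -[X in _ <= X]mulr1 ler_wpM2l // exprn_ge0.
  have B : 1 * `|z| ^+ j * `|p| ^+ (j + 'C(j.+2, 2)) / `|\prod_(i < j.+1) (1 - p - z * p ^+ i.+1)|
      <= `|z| ^+ j * 2 ^+ j.+1.
    rewrite mul1r; apply: ler_pM => //; by rewrite mulr_ge0 // exprn_ge0.
  apply: (le_trans B); rewrite exprS.
  have : (`|z| * 2) ^+ j <= (1 / 4) ^+ j by apply: pow_le; rewrite ?mulr_ge0 //; lra.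
  rewrite exprMn.
  have : 0 <= `|z| ^+ j * 2 ^+ j by rewrite mulr_ge0 // exprn_ge0.
  nra.
have Hc := @geo_cvg _ 2 (1 / 4) ltac:(apply/andP; split; lra) Hb.
exists (limn (series (rhs_term1 z p))); split; first exact: Hc.
set S1 := limn _.
have E1 : forall K, hN w p K.+1 =
   (hN w p K.+1 - \sum_(k < K.+1) gk w p k / Qw w p k.+1)
   + (1 + (1 - p) * (z * series (rhs_term1 z p) K) - Ek w p K).
  move=> K; rewrite (@C_eq w p K Hnz).
  have -> : z * series (rhs_term1 z p) K = - \sum_(j < K) Ek w p j.
    rewrite seriesEord /= mulr_sumr -sumrN; apply: eq_bigr => j _.
    by rewrite (@term1_E z p j Hp1' Hnz).
  ring.
have HD : (fun K => hN w p K.+1 - \sum_(k < K.+1) gk w p k / Qw w p k.+1) @ \oo --> 0.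
  apply: (@geo_to0 _ 6 (1 / 4)); first by apply/andP; split; lra.
  move=> K; apply: (le_trans (@diff_bound w p K.+1 Hw Hp1b)).
  rewrite exprS.
  have : 0 <= (1 / 4) ^+ K :> R by rewrite exprn_ge0 //; lra.
  nra.
have HE : (fun K => Ek w p K) @ \oo --> 0.
  apply: (@geo_to0 _ 1 (1 / 4)); first by apply/andP; split; lra.
  by move=> K; rewrite mul1r; apply: normEk.
have HL : (fun K => hN w p K.+1) @ \oo --> 0 + (1 + (1 - p) * (z * S1) - 0).
  under eq_fun do rewrite E1.
  apply: cvgD => //.
  apply: cvgB => //.
  apply: cvgD; first exact: cvg_cst.
  apply: cvgMl_tmp; apply: cvgMl_tmp; exact: Hc.
rewrite add0r subr0 in HL.
rewrite -(cvg_shiftS (fun N => hN w p N)); exact: HL.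
Qed.
Fixpoint Ls (n : nat) : seq (seq nat) :=
  if n is m.+1 then [seq rcons s k | s <- Ls m, k <- index_iota 1 m.+2] else [:: [::]].

Definition good n (s : seq nat) : bool :=
  (size s == n) && all (fun i => (0 < nth 0 s i <= i.+1)%N) (iota 0 n).

Lemma good_rcons n s k : good n.+1 (rcons s k) = good n s && (0 < k <= n.+1)%N.
Proof.
rewrite /good.
have -> : iota 0 n.+1 = iota 0 n ++ [:: n] by rewrite -addn1 iotaD.
rewrite size_rcons eqSS all_cat /= andbT.
case Hs: (size s == n) => //=.
move/eqP: Hs => Hs.
rewrite nth_rcons Hs ltnn eqxx.
congr andb.
apply: eq_in_all => i; rewrite mem_iota add0n => /andP[_ Hi].
by rewrite nth_rcons Hs Hi.
Qed.

Lemma mem_Ls n s : (s \in Ls n) = good n s.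
Proof.
elim: n s => [|n IH] s.
  rewrite inE /good /=; case: s => //.
case/lastP: s => [|s k].
  have -> : good n.+1 [::] = false by [].
  apply/negbTE/allpairsP => -[[s k] [_ _]] /=.
  by case: s.
rewrite good_rcons; apply/allpairsP/idP.
  move=> [[s' k'] [/= Hs Hk /rcons_inj [-> ->]]].
  by rewrite -IH Hs /=; move: Hk; rewrite mem_index_iota.
move=> /andP[Hg Hk]; exists (s, k); split => //=.
  by rewrite IH.
by rewrite mem_index_iota; exact: Hk.
Qed.

Lemma uniq_Ls n : uniq (Ls n).
Proof.
elim: n => [|n IH] //.
change (uniq [seq rcons s k | s <- Ls n, k <- index_iota 1 n.+2]).
apply: allpairs_uniq => //; first exact: iota_uniq.
by move=> [s k] [s' k'] _ _ /= /rcons_inj.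
Qed.

Lemma size_letters {n} (f : word n) : size (letters f) = n.
Proof. by rewrite /letters size_map size_enum_ord. Qed.

Lemma nth_letters {n} (f : word n) i (Hi : (i < n)%N) :
  nth 0 (letters f) i = val (f (Ordinal Hi)).
Proof.
rewrite /letters (nth_map (Ordinal Hi)) ?size_enum_ord //.
congr (val (f _)); apply: val_inj; by rewrite /= nth_enum_ord.
Qed.

Lemma inv_good {n} (f : word n) : is_invseq f = good n (letters f).
Proof.
rewrite /good size_letters eqxx /=.
apply/forallP/allP.
  move=> H i; rewrite mem_iota add0n => /andP[_ Hi].
  by rewrite (nth_letters f i Hi); apply: H.
move=> H i; have := H i; rewrite mem_iota add0n ltn_ord => /(_ isT).
rewrite (nth_letters f i (ltn_ord i)).
by have -> : Ordinal (ltn_ord i) = i by apply: val_inj.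
Qed.

Lemma letters_inj n : injective (@letters n).
Proof.
move=> f g H; apply/ffunP => i; apply: val_inj.
have E : forall h : word n, val (h i) = nth 0 (letters h) i.
  by move=> h; rewrite (nth_letters h i (ltn_ord i)); congr (val (h _)); apply: val_inj.
by rewrite !E H.
Qed.

Lemma good_letters {n} s : good n s -> exists f : word n, letters f = s.
Proof.
move=> Hg; have := Hg; rewrite /good => /andP[/eqP Hs Ha].
exists [ffun i : 'I_n => inord (nth 0 s i)].
apply: (@eq_from_nth _ 0); first by rewrite size_letters Hs.
move=> i; rewrite size_letters => Hi.
rewrite (nth_letters _ i Hi) ffunE /= inordK //.
have := allP Ha i; rewrite mem_iota add0n Hi => /(_ isT) /andP[_ H].
by rewrite ltnS (leq_trans H).
Qed.

Lemma sum_transfer n (G : seq nat -> R) :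
  \sum_(f : word n | is_invseq f) G (letters f) = \sum_(s <- Ls n) G s.
Proof.
rewrite -big_filter.
transitivity (\sum_(s <- map (@letters n) [seq f <- index_enum (word n) | is_invseq f]) G s).
  by rewrite big_map.
apply: perm_big; apply: uniq_perm.
- rewrite map_inj_in_uniq; first by rewrite filter_uniq // index_enum_uniq.
  by move=> f g _ _; apply: letters_inj.
- exact: uniq_Ls.
move=> s; rewrite mem_Ls; apply/mapP/idP.
  by move=> [f]; rewrite mem_filter => /andP[Hf _] ->; rewrite -inv_good.
move=> Hg; have [f Hf] := good_letters s Hg.
exists f => //; rewrite mem_filter mem_index_enum andbT inv_good Hf //.
Qed.
Definition Tp (p : R) n : R := \prod_(i < n) (\sum_(1 <= k < i.+2) p ^+ k).

Lemma sumL_tot p n : \sum_(s <- Ls n) p ^+ (sumn s) = Tp p n.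
Proof.
elim: n => [|n IH]; first by rewrite /= big_seq1 /Tp big_ord0 expr0.
change (\sum_(s <- [seq rcons s k | s <- Ls n, k <- index_iota 1 n.+2]) p ^+ sumn s = Tp p n.+1).
rewrite big_allpairs_dep /Tp big_ord_recr /= -/(Tp p n) -IH mulr_suml.
apply: eq_bigr => s _; rewrite mulr_sumr; apply: eq_bigr => k _.
by rewrite sumn_rcons exprD.
Qed.

Lemma sumL_last y p n : \sum_(s <- Ls n.+1) y ^+ (last 0%N s) * p ^+ (sumn s)
   = Tp p n * \sum_(1 <= k < n.+2) (y * p) ^+ k.
Proof.
change (\sum_(s <- [seq rcons s k | s <- Ls n, k <- index_iota 1 n.+2]) y ^+ (last 0%N s) * p ^+ (sumn s)
   = Tp p n * \sum_(1 <= k < n.+2) (y * p) ^+ k).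
rewrite big_allpairs_dep -sumL_tot mulr_suml.
apply: eq_bigr => s _; rewrite mulr_sumr; apply: eq_bigr => k _.
by rewrite sumn_rcons last_rcons exprD exprMn; ring.
Qed.

Lemma area_letters n (f : word n) : area f = sumn (letters f).
Proof.
rewrite /area /letters sumnE big_map /= big_enum /=.
by apply: eq_bigl => i.
Qed.

Lemma a_coef_L n y p : a_coef n.+1 y p 1 = Tp p n * \sum_(1 <= k < n.+2) (y * p) ^+ k.
Proof.
rewrite -sumL_last -(sum_transfer _ (fun s => y ^+ (last 0%N s) * p ^+ (sumn s))) /a_coef.
under eq_bigr do rewrite big_mkcondr mulr_sumr.
rewrite exchange_big /=.
apply: eq_bigr => f Hf.
have Hmem : last_letter f \in index_iota 1 n.+2.
  move: Hf; rewrite inv_good /good => /andP[/eqP Hs /allP Ha].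
  have := Ha n; rewrite mem_iota add0n ltnSn => /(_ isT).
  rewrite /last_letter -(nth_last 0%N) Hs /= mem_index_iota.
  by [].
rewrite (bigD1_seq (last_letter f)) //; last by rewrite /index_iota iota_uniq.
rewrite eqxx big1 /=.
  by rewrite addr0 expr1n mulr1 area_letters.
move=> i /negbTE Hi; by rewrite eq_sym Hi mulr0.
Qed.

Lemma a_coef0 y p : a_coef 0 y p 1 = 0 :> R.
Proof. by rewrite /a_coef big_geq. Qed.
Lemma geo1 (q : R) n : (1 - q) * \sum_(1 <= k < n.+2) q ^+ k = q * (1 - q ^+ n.+1).
Proof.
elim: n => [|n IH]; first by rewrite big_nat1 expr1; ring.
rewrite big_nat_recr //= mulrDr IH !exprS; ring.
Qed.

Lemma Tp_Pq p m : 1 - p != 0 -> Tp p m = (p / (1 - p)) ^+ m * Pq p m.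
Proof.
move=> Hp; elim: m => [|m IH]; first by rewrite /Tp /Pq !big_ord0 expr0 mulr1.
rewrite /Tp big_ord_recr /= -/(Tp p m) IH /Pq big_ord_recr /= -/(Pq p m).
have G := geo1 p m.
have -> : \sum_(1 <= k < m.+2) p ^+ k = p * (1 - p ^+ m.+1) / (1 - p).
  by apply: (@mulfI _ (1 - p)) => //; rewrite G; field.
rewrite (exprS (p / (1 - p)) m); field; exact: Hp.
Qed.

Lemma term2_term1 x y p j : rhs_term2 x y p j = rhs_term1 (x * y * p) p j.
Proof.
rewrite /rhs_term2 /rhs_term1.
have -> : \prod_(i < j.+1) (1 - p - x * y * p ^+ i.+2) = \prod_(i < j.+1) (1 - p - x * y * p * p ^+ i.+1).
  by apply: eq_bigr => i _; rewrite (exprS p i.+1); ring.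
have -> : (2 * j + 'C(j.+2, 2) = j + (j + 'C(j.+2, 2)))%N by rewrite mul2n -addnn addnA.
rewrite !exprD !exprMn; ring.
Qed.

Lemma a_term y p x m : 1 - p != 0 -> 1 - y * p != 0 ->
  a_coef m.+1 y p 1 * x ^+ m.+1 =
  y * p / (1 - y * p) * (x * ((x * p / (1 - p)) ^+ m * Pq p m)
     - x * y * p * ((x * y * p * p / (1 - p)) ^+ m * Pq p m)).
Proof.
move=> Hp Hyp.
rewrite a_coef_L Tp_Pq //.
have G := geo1 (y * p) m.
have -> : \sum_(1 <= k < m.+2) (y * p) ^+ k = y * p * (1 - (y * p) ^+ m.+1) / (1 - y * p).
  by apply: (@mulfI _ (1 - y * p)) => //; rewrite G; field.
rewrite ?exprS ?exprMn ?expr_div_n ?exprMn; field.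
exact: Hyp.
Qed.
End S.
Arguments hN {R}. Arguments core {R}.
Theorem theorem2p7 (R : realType) (y : R) :
  exists2 d : R, 0 < d &
    forall x p : R, `|x| < d -> `|p| < d ->
      exists S1 S2 : R,
        series (rhs_term1 x p) @ \oo --> S1 /\
        series (rhs_term2 x y p) @ \oo --> S2 /\
        series (fun n => a_coef n y p 1 * x ^+ n) @ \oo -->
          x * y * p
          + x ^+ 2 * y * p * (1 - p) / (1 - y * p)
            * (S1 - y ^+ 2 * p ^+ 2 * S2).
Proof.
set t := `|y| + 1.
have Ht : 1 <= t by rewrite /t; have := normr_ge0 y; lra.
exists (1 / (8 * t)); first by rewrite divr_gt0 // mulr_gt0 //; lra.
set d := 1 / (8 * t).
have Hd : d * (8 * t) = 1.
  by rewrite /d; field; rewrite gt_eqF //; lra.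
have Hd0 : 0 < d by rewrite /d divr_gt0 // mulr_gt0 //; lra.
have Hd8 : d <= 1 / 8 by nra.
have Hdy : d * `|y| <= 1 / 8 by have := normr_ge0 y; rewrite /t in Hd; nra.
move=> x p Hx Hp.
have Hx0 := normr_ge0 x; have Hp0 := normr_ge0 p; have Hy0 := normr_ge0 y.
have Hx8 : `|x| <= 1 / 8 by lra.
have Hp8 : `|p| <= 1 / 8 by lra.
have Hz2 : `|x * y * p| <= 1 / 8.
  rewrite !normrM.
  have : `|x| * `|y| <= d * `|y| by apply: ler_wpM2r => //; lra.
  have : 0 <= `|x| * `|y| by rewrite mulr_ge0.
  nra.
have Hpl : p <= `|p| := ler_norm p.
have Hp1 : 1 - p != 0 by rewrite subr_eq0 eq_sym lt_eqF //; lra.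
have Hyp : 1 - y * p != 0.
  have : y * p <= `|y * p| := ler_norm (y * p).
  rewrite normrM.
  have : `|y| * `|p| <= `|y| * d by apply: ler_wpM2l => //; lra.
  move=> H1 H2; rewrite subr_eq0 eq_sym lt_eqF //; nra.
have [S1 [HS1 HH1]] := core x p Hx8 Hp8.
have [S2 [HS2 HH2]] := core (x * y * p) p Hz2 Hp8.
exists S1, S2; split => //.
have -> : rhs_term2 x y p = rhs_term1 (x * y * p) p.
  by apply: funext => j; rewrite term2_term1.
split => //.
rewrite -cvg_shiftS.
have E : forall N, series (fun n => a_coef n y p 1 * x ^+ n) N.+1 =
   y * p / (1 - y * p) * (x * hN (x * p / (1 - p)) p N
     - x * y * p * hN (x * y * p * p / (1 - p)) p N).
  move=> N; rewrite seriesEord /= big_ord_recl /= a_coef0 mul0r add0r.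
  rewrite /hN mulr_sumr mulr_sumr -sumrB mulr_sumr.
  apply: eq_bigr => m _; exact: a_term.
have HL : (fun N => y * p / (1 - y * p) * (x * hN (x * p / (1 - p)) p N
     - x * y * p * hN (x * y * p * p / (1 - p)) p N)) @ \oo -->
   y * p / (1 - y * p) * (x * (1 + (1 - p) * (x * S1))
     - x * y * p * (1 + (1 - p) * (x * y * p * S2))).
  apply: cvgMl_tmp; apply: cvgB; apply: cvgMl_tmp; [exact: HH1 | exact: HH2].
have -> : x * y * p + x ^+ 2 * y * p * (1 - p) / (1 - y * p) * (S1 - y ^+ 2 * p ^+ 2 * S2)
   = y * p / (1 - y * p) * (x * (1 + (1 - p) * (x * S1))
     - x * y * p * (1 + (1 - p) * (x * y * p * S2))).
  by field.
apply: (cvg_trans _ HL).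
apply: near_eq_cvg; apply: nearW => N /=.
by rewrite E.
Qed.
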